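(* Let $X$ be a non-negative heavy-tailed random variable and let $h_X$ be a natural scale of $X$. Then the map $c\mapsto \mathbb{I}_{h_X}(cX)$, defined for $c>0$, is continuous at $c=1$ (where its value is $1$).
   Context: $R_Y(x):=-\log P(Y>x)$. $Y$ is heavy-tailed if $E(e^{sY})=\infty$ for all $s>0$. A natural scale of a heavy-tailed $Y$ is a concave $h:[0,\infty)\to[0,\infty)$ with $h(0)=0$, $h(x)\to\infty$, and $\liminf_{x\to\infty}R_Y(x)/h(x)=1$. For a continuous increasing $h:[0,\infty)\to[0,\infty)$ with $h(x)\to\infty$, $\mathbb{I}_h(Y):=\liminf_{x\to\infty}R_Y(x)/h(x)$, which equals $\sup\{s\ge0: E(e^{s h(Y)})<\infty\}$ for non-negative $Y$. *)

(* Defs.v *)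
From Stdlib Require Import Reals Lra.
Open Scope R_scope.

(* A non-negative random variable X is represented by its law, i.e. by its
   survival function G x = P(X > x).  Such functions are exactly the
   nonincreasing, right-continuous functions with values in [0,1] that equal
   1 on (-oo,0) (non-negativity) and tend to 0 at +oo. *)
Definition survival_nonneg (G : R -> R) : Prop :=
  (forall x, 0 <= G x <= 1) /\
  (forall x y, x <= y -> G y <= G x) /\
  (forall x, x < 0 -> G x = 1) /\
  (forall x eps, 0 < eps -> exists d, 0 < d /\ forall y, x <= y < x + d -> Rabs (G y - G x) < eps) /\
  (forall eps, 0 < eps -> exists M, forall x, M <= x -> G x < eps).

(* Expectation of a non-negative random variable Z with survival function S is
   E Z = int_0^oo P(Z > t) dt.  For S nonincreasing this (Lebesgue) integral is
   the supremum of the lower (right-endpoint) Riemann sums over uniform grids of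
   [0,T]; E Z < oo iff these sums are bounded. *)
Definition lower_sum (Sv : R -> R) (T : R) (n : nat) : R :=
  sum_f_R0 (fun i => Sv (T * INR (Datatypes.S i) / INR (Datatypes.S n)) * (T / INR (Datatypes.S n))) n.

Definition finite_expectation (Sv : R -> R) : Prop :=
  exists M, forall T n, 0 < T -> lower_sum Sv T n <= M.

(* P(e^{sX} > t) = P(X > ln t / s) for t > 0, s > 0. *)
Definition mgf_finite (G : R -> R) (s : R) : Prop :=
  finite_expectation (fun t => G (ln t / s)).

Definition heavy_tailed (G : R -> R) : Prop :=
  forall s, 0 < s -> ~ mgf_finite G s.

Definition Rfun (G : R -> R) (x : R) : R := - ln (G x).

Definition is_liminf_infty (f : R -> R) (l : R) : Prop :=
  forall eps, 0 < eps ->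
    (exists y, forall x, y <= x -> l - eps < f x) /\
    (forall y, exists x, y <= x /\ f x < l + eps).

Definition I_h_is (h : R -> R) (G : R -> R) (l : R) : Prop :=
  is_liminf_infty (fun x => Rfun G x / h x) l.

Definition natural_scale (h : R -> R) (G : R -> R) : Prop :=
  (forall x, 0 <= x -> 0 <= h x) /\
  (forall x y t, 0 <= x -> 0 <= y -> 0 <= t <= 1 ->
      t * h x + (1 - t) * h y <= h (t * x + (1 - t) * y)) /\
  h 0 = 0 /\
  (forall M, exists y, forall x, y <= x -> M <= h x) /\
  I_h_is h G 1.

Definition scale_surv (c : R) (G : R -> R) : R -> R := fun x => G (x / c).

(* Main.v *)
Require Import Defs.
From Stdlib Require Import Reals Lra Classical FunctionalExtensionality.
Open Scope R_scope.

Lemma liminf_exists (f : R -> R) (A B : R) :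
  (exists y, forall x, y <= x -> A <= f x) ->
  (forall y, exists x, y <= x /\ f x <= B) ->
  exists l, is_liminf_infty f l /\ A <= l /\ l <= B.
Proof.
  intros [y0 Hy0] Hfr.
  set (E := fun a => exists y, forall x, y <= x -> a <= f x).
  assert (Hb : bound E).
  { exists B. intros a [y Hy]. destruct (Hfr y) as [x [Hx Hfx]].
    specialize (Hy x Hx). lra. }
  assert (Hne : exists a, E a) by (exists A; exists y0; exact Hy0).
  destruct (completeness E Hb Hne) as [l [Hub Hlub]].
  exists l. split; [|split].
  - intros eps Heps. split.
    + destruct (classic (exists a, E a /\ l - eps < a)) as [[a [[y Hy] Ha]]|N].
      * exists y. intros x Hx. specialize (Hy x Hx). lra.
      * exfalso. assert (U : is_upper_bound E (l - eps)).
        { intros a Ea. destruct (Rle_lt_dec a (l - eps)); auto.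
          exfalso; apply N; eauto. }
        specialize (Hlub _ U). lra.
    + intro y. destruct (classic (exists x, y <= x /\ f x < l + eps)) as [H|N]; auto.
      exfalso. assert (Ee : E (l + eps)).
      { exists y. intros x Hx. destruct (Rlt_le_dec (f x) (l + eps)) as [r|r]; auto.
        exfalso; apply N; eauto. }
      specialize (Hub _ Ee). lra.
  - apply Hub. exists y0; exact Hy0.
  - apply Hlub. intros a [y Hy]. destruct (Hfr y) as [x [Hx Hfx]].
    specialize (Hy x Hx). lra.
Qed.

Lemma h_mono (h : R -> R) :
  (forall x y t, 0 <= x -> 0 <= y -> 0 <= t <= 1 ->
      t * h x + (1 - t) * h y <= h (t * x + (1 - t) * y)) ->
  (forall M, exists y, forall x, y <= x -> M <= h x) ->
  forall x y, 0 <= x -> x <= y -> h x <= h y.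
Proof.
  intros Hc Hu x y Hx Hxy.
  destruct (Req_dec x y) as [->|Hne]; [lra|].
  destruct (Hu (h x)) as [yM HyM].
  set (z := Rmax (y + 1) yM).
  assert (Hz1 : y + 1 <= z) by apply Rmax_l.
  assert (Hz2 : h x <= h z) by (apply HyM; apply Rmax_r).
  set (t := (z - y) / (z - x)).
  assert (Ht : 0 <= t <= 1).
  { unfold t; split.
    - apply Rmult_le_pos; [lra|]. left; apply Rinv_0_lt_compat; lra.
    - apply Rmult_le_reg_r with (z - x); [lra|].
      unfold Rdiv; rewrite Rmult_assoc, Rinv_l; lra. }
  assert (Heq : t * x + (1 - t) * z = y).
  { unfold t. field. lra. }
  specialize (Hc x z t Hx ltac:(lra) Ht). rewrite Heq in Hc.
  nra.
Qed.

Lemma h_ratio (h : R -> R) :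
  (forall x, 0 <= x -> 0 <= h x) ->
  (forall x y t, 0 <= x -> 0 <= y -> 0 <= t <= 1 ->
      t * h x + (1 - t) * h y <= h (t * x + (1 - t) * y)) ->
  h 0 = 0 ->
  (forall M, exists y, forall x, y <= x -> M <= h x) ->
  forall k m x, 0 < k -> m <= 1 -> m <= k -> 0 <= x -> m * h x <= h (k * x).
Proof.
  intros Hnn Hc H0 Hu k m x Hk Hm1 Hmk Hx.
  pose proof (Hnn x Hx) as Hhx.
  destruct (Rle_lt_dec 1 k).
  - assert (h x <= h (k * x)) by (apply (h_mono h Hc Hu); nra). nra.
  - specialize (Hc x 0 k Hx ltac:(lra) ltac:(lra)).
    rewrite H0, !Rmult_0_r, !Rplus_0_r in Hc. nra.
Qed.

Theorem lemma4p2 (G h : R -> R) :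
  survival_nonneg G -> heavy_tailed G -> natural_scale h G ->
  I_h_is h (scale_surv 1 G) 1 /\
  (forall eps, 0 < eps -> exists delta, 0 < delta /\
     forall c, 0 < c -> Rabs (c - 1) < delta ->
       exists l, I_h_is h (scale_surv c G) l /\ Rabs (l - 1) < eps).
Proof.
  intros _ _ [Hnn [Hc [H0 [Hu HI]]]].
  split.
  - unfold I_h_is, Rfun, scale_surv.
    replace (fun x => - ln (G (x / 1)) / h x) with (fun x => - ln (G x) / h x).
    exact HI.
    apply functional_extensionality; intro x. unfold Rdiv.
    rewrite Rinv_1, Rmult_1_r. reflexivity.
  - intros eps Heps.
    set (e := Rmin eps 1 / 4).
    assert (He1 : e <= eps / 4) by (unfold e; pose proof (Rmin_l eps 1); lra).
    assert (He2 : e <= 1 / 4) by (unfold e; pose proof (Rmin_r eps 1); lra).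
    assert (He0 : 0 < e) by (unfold e; apply Rmin_case; lra).
    exists (e / 2). split; [lra|].
    intros c Hc0 Hcd.
    assert (Hcb : 1 - e / 2 < c < 1 + e / 2) by (apply Rabs_def2 in Hcd; lra).
    set (m := Rmin c (/ c)).
    assert (Hic : 1 - e <= / c).
    { apply Rmult_le_reg_r with c; [lra|]. rewrite Rinv_l by lra. nra. }
    assert (Hm : 1 - e <= m) by (unfold m; apply Rmin_case; lra).
    assert (Hm1 : m <= 1).
    { unfold m. destruct (Rle_lt_dec c 1).
      - pose proof (Rmin_l c (/ c)); lra.
      - assert (/ c < 1). { apply Rmult_lt_reg_r with c; [lra|]. rewrite Rinv_l; lra. }
        pose proof (Rmin_r c (/ c)); lra. }
    assert (Hmc : m <= c) by apply Rmin_l.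
    assert (Hmic : m <= / c) by apply Rmin_r.
    destruct (Hu 1) as [yh Hyh].
    destruct (HI e He0) as [[y1 Hy1] Hfr1].
    destruct (liminf_exists (fun x => Rfun (scale_surv c G) x / h x)
                ((1 - e) * (1 - e)) ((1 + e) / (1 - e))) as [l [Hl [HlA HlB]]].
    + exists (Rmax (Rmax 0 yh) (c * y1)). intros x Hx.
      pose proof (Rmax_l (Rmax 0 yh) (c * y1)).
      pose proof (Rmax_r (Rmax 0 yh) (c * y1)).
      pose proof (Rmax_l 0 yh). pose proof (Rmax_r 0 yh).
      assert (Hx0 : 0 <= x) by lra.
      assert (Hhx : 1 <= h x) by (apply Hyh; lra).
      assert (Hxc : y1 <= x / c).
      { apply Rmult_le_reg_l with c; [lra|]. field_simplify; lra. }
      specialize (Hy1 _ Hxc). simpl in Hy1.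
      assert (Hr : m * h x <= h (/ c * x)).
      { apply (h_ratio h Hnn Hc H0 Hu); auto. apply Rinv_0_lt_compat; lra. }
      replace (/ c * x) with (x / c) in Hr by (unfold Rdiv; ring).
      assert (Hhxc : 0 < h (x / c)) by nra.
      unfold Rfun, scale_surv in *.
      assert (Hk : (1 - e) * h (x / c) < - ln (G (x / c))).
      { apply Rmult_lt_compat_r with (r := h (x / c)) in Hy1; auto.
        unfold Rdiv in Hy1. rewrite Rmult_assoc, Rinv_l in Hy1; lra. }
      apply Rmult_le_reg_r with (h x); [lra|].
      replace (- ln (G (x / c)) / h x * h x) with (- ln (G (x / c))) by (field; lra). assert ((1 - e) * h x <= m * h x) by nra. assert ((1 - e) * (m * h x) <= (1 - e) * h (x / c)) by nra. nra.
    + intro y.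
      destruct (Hfr1 (Rmax (Rmax 0 yh) (Rmax (y / c) (yh / c)))) as [z [Hz Hfz]].
      pose proof (Rmax_l (Rmax 0 yh) (Rmax (y / c) (yh / c))).
      pose proof (Rmax_r (Rmax 0 yh) (Rmax (y / c) (yh / c))).
      pose proof (Rmax_l 0 yh). pose proof (Rmax_r 0 yh).
      pose proof (Rmax_l (y / c) (yh / c)). pose proof (Rmax_r (y / c) (yh / c)).
      exists (c * z). split.
      { apply Rle_trans with (c * (y / c)); [right; field; lra|].
        apply Rmult_le_compat_l; lra. }
      assert (Hz0 : 0 <= z) by lra.
      assert (Hhz : 1 <= h z) by (apply Hyh; lra).
      assert (Hhcz : 1 <= h (c * z)).
      { apply Hyh. apply Rle_trans with (c * (yh / c)); [right; field; lra|].
        apply Rmult_le_compat_l; lra. }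
      assert (Hr : m * h z <= h (c * z)) by (apply (h_ratio h Hnn Hc H0 Hu); auto).
      unfold Rfun, scale_surv in *. simpl in Hfz.
      replace (c * z / c) with z by (field; lra).
      assert (Hk : - ln (G z) < (1 + e) * h z).
      { apply Rmult_lt_compat_r with (r := h z) in Hfz; [|lra].
        unfold Rdiv in Hfz. rewrite Rmult_assoc, Rinv_l in Hfz; lra. }
      assert (Hk2 : - ln (G z) * (1 - e) <= (1 + e) * h (c * z)) by (assert ((1 - e) * h z <= h (c * z)) by nra; assert (- ln (G z) * (1 - e) <= (1 + e) * h z * (1 - e)) by nra; nra).
      apply Rmult_le_reg_r with (h (c * z) * (1 - e)); [nra|].
      replace (- ln (G z) / h (c * z) * (h (c * z) * (1 - e))) with (- ln (G z) * (1 - e))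
        by (field; lra).
      replace ((1 + e) / (1 - e) * (h (c * z) * (1 - e))) with ((1 + e) * h (c * z))
        by (field; lra).
      exact Hk2.
    + exists l. split; [exact Hl|].
      assert (HB : (1 + e) / (1 - e) < 1 + eps).
      { apply Rmult_lt_reg_r with (1 - e); [lra|].
        unfold Rdiv; rewrite Rmult_assoc, Rinv_l by lra. nra. }
      apply Rabs_def1; nra.
Qed.
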